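(* Let $G=(V,E,w)$ be a weighted graph with $n=|V|$ vertices. Let $\mathrm{A}(G)$ be the maximum of \[\tfrac14\,\mathbb{E}_{(\mathbf{u},\mathbf{v})\sim E}\big[1-\langle f_X(\mathbf{u}),f_X(\mathbf{v})\rangle-\langle f_Y(\mathbf{u}),f_Y(\mathbf{v})\rangle-\langle f_Z(\mathbf{u}),f_Z(\mathbf{v})\rangle\big]\] over all $f_X,f_Y,f_Z:V\to S^{3n-1}$ such that $\langle f_P(v),f_Q(v)\rangle=0$ for every $v\in V$ and all distinct $P,Q\in\{X,Y,Z\}$. Then \[\mathrm{A}(G)=\max_{f:V\to S^{n-1}}\mathbb{E}_{(\mathbf{u},\mathbf{v})\sim E}\big[\tfrac14-\tfrac34\langle f(\mathbf{u}),f(\mathbf{v})\rangle\big].\]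
   Context: A weighted graph $G=(V,E,w)$ is a finite undirected graph with nonnegative edge weights summing to $1$; $(\mathbf{u},\mathbf{v})\sim E$ is a random edge drawn according to the weights. $S^{m-1}$ is the unit sphere of $\mathbb{R}^m$. *)

(* Defs.v *)
From HB Require Import structures.
From mathcomp Require Import all_boot all_order all_algebra.
From mathcomp Require Import reals.
Set Implicit Arguments. Unset Strict Implicit. Unset Printing Implicit Defensive.
Import Order.TTheory GRing.Theory Num.Theory.
Local Open Scope ring_scope.

Definition dotp (R : realType) (m : nat) (x y : 'rV[R]_m) : R :=
  \sum_(i < m) x 0 i * y 0 i.

Definition on_sphere (R : realType) (m : nat) (x : 'rV[R]_m) : Prop :=
  dotp x x = 1.

(* A weighted graph on the finite vertex type V: undirected (symmetric
   weights), no loops, nonnegative weights on unordered edges summing to 1.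
   The weight of the unordered edge {u,v} is w u v = w v u; an absent edge
   has weight 0. Each unordered edge is counted twice in the double sum. *)
Definition weighted_graph (R : realType) (V : finType) (w : V -> V -> R) : Prop :=
  [/\ forall u v, 0 <= w u v,
      forall u v, w u v = w v u,
      forall u, w u u = 0
    & (\sum_(u : V) \sum_(v : V) w u v) / 2 = 1].

(* E_{(u,v) ~ E}[F u v]: a random edge drawn by weight, with uniformly random
   orientation of its endpoints. *)
Definition edge_expect (R : realType) (V : finType) (w : V -> V -> R)
  (F : V -> V -> R) : R :=
  (\sum_(u : V) \sum_(v : V) w u v * F u v) / 2.

Definition is_max (R : realType) (S : R -> Prop) (a : R) : Prop :=
  S a /\ forall b, S b -> b <= a.

Definition A_values (R : realType) (V : finType) (w : V -> V -> R) (a : R) : Prop :=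
  exists fX fY fZ : V -> 'rV[R]_(3 * #|V|),
    (forall v, [/\ on_sphere (fX v), on_sphere (fY v) & on_sphere (fZ v)]) /\
    (forall v, [/\ dotp (fX v) (fY v) = 0, dotp (fX v) (fZ v) = 0
                 & dotp (fY v) (fZ v) = 0]) /\
    a = 4^-1 * edge_expect w (fun u v =>
          1 - dotp (fX u) (fX v) - dotp (fY u) (fY v) - dotp (fZ u) (fZ v)).

Definition B_values (R : realType) (V : finType) (w : V -> V -> R) (b : R) : Prop :=
  exists f : V -> 'rV[R]_(#|V|),
    (forall v, on_sphere (f v)) /\
    b = edge_expect w (fun u v => 4^-1 - 3 / 4 * dotp (f u) (f v)).

(* Main.v *)
Require Import Defs.
From HB Require Import structures.
From mathcomp Require Import all_boot all_order all_algebra.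
From mathcomp Require Import reals.
From mathcomp Require Import all_classical all_analysis.
From mathcomp Require Import ring lra.
Set Implicit Arguments. Unset Strict Implicit. Unset Printing Implicit Defensive.
Import Order.TTheory GRing.Theory Num.Theory.
Import numFieldTopology.Exports numFieldNormedType.Exports.
Local Open Scope ring_scope.

Section Dot.
Variable R : realType.

Lemma dotpC m (x y : 'rV[R]_m) : dotp x y = dotp y x.
Proof. by rewrite /dotp; apply: eq_bigr => i _; rewrite mulrC. Qed.

Lemma dotpDl m (x y z : 'rV[R]_m) : dotp (x + y) z = dotp x z + dotp y z.
Proof. by rewrite /dotp -big_split; apply: eq_bigr => i _; rewrite mxE mulrDl. Qed.

Lemma dotpZl m a (x y : 'rV[R]_m) : dotp (a *: x) y = a * dotp x y.
Proof. by rewrite /dotp mulr_sumr; apply: eq_bigr => i _; rewrite mxE mulrA. Qed.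

Lemma dotpDr m (x y z : 'rV[R]_m) : dotp z (x + y) = dotp z x + dotp z y.
Proof. by rewrite dotpC dotpDl !(dotpC z). Qed.

Lemma dotpZr m a (x y : 'rV[R]_m) : dotp y (a *: x) = a * dotp y x.
Proof. by rewrite dotpC dotpZl dotpC. Qed.

Lemma dotp0l m (x : 'rV[R]_m) : dotp 0 x = 0.
Proof. by rewrite /dotp big1 // => i _; rewrite mxE mul0r. Qed.

Lemma dotp0r m (x : 'rV[R]_m) : dotp x 0 = 0.
Proof. by rewrite dotpC dotp0l. Qed.

Lemma dotp_row_mx m1 m2 (a c : 'rV[R]_m1) (b d : 'rV[R]_m2) :
  dotp (row_mx a b) (row_mx c d) = dotp a c + dotp b d.
Proof.
rewrite /dotp big_split_ord /=; congr (_ + _); apply: eq_bigr => i _.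
  by rewrite !row_mxEl.
by rewrite !row_mxEr.
Qed.

Lemma dotp_cast m m' (e : m = m') (x y : 'rV[R]_m) :
  dotp (castmx (erefl 1%N, e) x) (castmx (erefl 1%N, e) y) = dotp x y.
Proof. by case: m' / e; rewrite !castmx_id. Qed.

Lemma dotp_ge0 m (x : 'rV[R]_m) : 0 <= dotp x x.
Proof. by rewrite /dotp sumr_ge0 // => i _; rewrite -expr2 sqr_ge0. Qed.

Lemma dotp_gt0 m (x : 'rV[R]_m) : x != 0 -> 0 < dotp x x.
Proof.
move=> x0; case: (pickP (fun k => x 0 k != 0)) => [k xk|H]; last first.
  by case/eqP: x0; apply/rowP => k; rewrite mxE; move/negbFE: (H k) => /eqP.
rewrite /dotp (bigD1 k) //=.
have h1 : 0 < x 0 k * x 0 k by rewrite -expr2 lt_def sqr_ge0 andbT sqrf_eq0.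
have h2 : 0 <= \sum_(i | i != k) x 0 i * x 0 i.
  by rewrite sumr_ge0 // => i _; rewrite -expr2 sqr_ge0.
lra.
Qed.

Definition evec m : 'rV[R]_m.+1 := \row_j (j == ord_max)%:R.

Lemma dotp_evec m (x : 'rV[R]_m.+1) : dotp x (evec m) = x 0 ord_max.
Proof.
rewrite /dotp (bigD1 ord_max) //= big1 => [|j /negbTE jn].
  by rewrite mxE eqxx mulr1 addr0.
by rewrite mxE jn mulr0.
Qed.

Lemma refl_iso m (w x y : 'rV[R]_m) : dotp w w != 0 ->
  dotp (x + (- (2 * dotp x w / dotp w w)) *: w)
       (y + (- (2 * dotp y w / dotp w w)) *: w) = dotp x y.
Proof.
move=> d0; rewrite !dotpDl !dotpDr !dotpZl !dotpZr (dotpC w y).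
by field.
Qed.

Lemma house_step m (u : 'rV[R]_m.+1) : u != 0 ->
  exists H : 'rV[R]_m.+1 -> 'rV[R]_m.+1,
    (forall x y, dotp (H x) (H y) = dotp x y) /\
    (forall x, dotp x u = 0 -> H x 0 ord_max = 0).
Proof.
move=> u0; have uu := dotp_gt0 u0.
pose s := Num.sqrt (dotp u u).
pose t := if 0 <= u 0 ord_max then s else - s.
have tt : t * t = dotp u u.
  by rewrite /t; case: ifP => _; rewrite ?mulrNN -expr2 sqr_sqrtr // ltW.
have tu : 0 <= t * u 0 ord_max.
  rewrite /t; case: ifP => h; first by rewrite mulr_ge0 // sqrtr_ge0.
  by rewrite mulNr -mulrN mulr_ge0 ?sqrtr_ge0 // oppr_ge0 ltW // ltNge h.
pose w := u + t *: evec m.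
have ee : dotp (evec m) (evec m) = 1 by rewrite dotp_evec mxE eqxx.
have dw : dotp w w = 2 * (t * t + t * u 0 ord_max).
  rewrite /w dotpDl !dotpDr !dotpZl !dotpZr ee dotp_evec (dotpC (evec m)) dotp_evec.
  rewrite -tt; ring.
have d0 : t * t + t * u 0 ord_max != 0.
  by rewrite gt_eqF // tt; move: tu uu; clear; lra.
exists (fun x => x + (- (2 * dotp x w / dotp w w)) *: w); split.
  by move=> x y; apply: refl_iso; rewrite dw mulf_neq0.
move=> x xu; rewrite -dotp_evec dotpDl dotpZl.
have xw : dotp x w = t * x 0 ord_max by rewrite /w dotpDr xu dotpZr dotp_evec add0r.
have we : dotp w (evec m) = u 0 ord_max + t by rewrite /w dotpDl dotpZl ee dotp_evec mulr1.
rewrite xw we dw dotp_evec; field.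
by rewrite d0.
Qed.

Lemma reduce_step (V : finType) m (g : V -> 'rV[R]_m.+1) : (#|V| <= m)%N ->
  exists g' : V -> 'rV[R]_m, forall a b, dotp (g' a) (g' b) = dotp (g a) (g b).
Proof.
move=> hm.
pose M : 'M[R]_(m.+1, #|V|) := \matrix_(i, j) g (enum_val j) 0 i.
have K0 : kermx M != 0.
  rewrite -mxrank_eq0 mxrank_ker subn_eq0 -ltnNge ltnS.
  exact: (leq_trans (rank_leq_col M)).
case: (pickP (fun i => row i (kermx M) != 0)) => [i ui|H]; last first.
  case/eqP: K0; apply/matrixP => a b; move/negbFE: (H a) => /eqP/rowP/(_ b).
  by rewrite !mxE.
pose u := row i (kermx M).
have uM v : dotp (g v) u = 0.
  have /eqP h : u *m M == 0 by rewrite -sub_kermx row_sub.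
  have := congr1 (fun A : 'M[R]_(1, #|V|) => A 0 (enum_rank v)) h; rewrite !mxE => e; rewrite -e /dotp.
  by apply: eq_bigr => k _; rewrite !mxE enum_rankK mulrC.
have [H [Hiso Hlast]] := house_step ui.
exists (fun a => \row_(j < m) H (g a) 0 (widen_ord (leqnSn m) j)) => a b.
rewrite -(Hiso (g a) (g b)) [in RHS]/dotp big_ord_recr /= (Hlast _ (uM a)) mul0r addr0.
by apply: eq_bigr => j _; rewrite !mxE.
Qed.

Lemma pad_lemma (V : finType) m n (g : V -> 'rV[R]_m) : (m <= n)%N ->
  exists h : V -> 'rV[R]_n, forall a b, dotp (h a) (h b) = dotp (g a) (g b).
Proof.
move=> le.
exists (fun a => castmx (erefl 1%N, subnKC le) (row_mx (g a) (0 : 'rV[R]_(n - m)))).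
by move=> a b; rewrite dotp_cast dotp_row_mx dotp0l addr0.
Qed.

Lemma reduce (V : finType) m (g : V -> 'rV[R]_m) :
  exists h : V -> 'rV[R]_#|V|, forall a b, dotp (h a) (h b) = dotp (g a) (g b).
Proof.
elim: m g => [|m IH] g; first exact: pad_lemma.
case: (leqP m.+1 #|V|) => hm; first exact: pad_lemma.
have [g' hg'] := reduce_step g (hm : (#|V| <= m)%N).
by have [h hh] := IH g'; exists h => a b; rewrite hh hg'.
Qed.

End Dot.

Section Main.
Variables (R : realType) (V : finType) (w : V -> V -> R).
Local Notation N := #|V|.
Local Notation X := 'rV[R]_(N * N).

Definition mkf (x : X) (v : V) : 'rV[R]_N :=
  \row_j x 0 (mxvec_index (enum_rank v) j).
Definition tovec (f : V -> 'rV[R]_N) : X :=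
  mxvec (\matrix_(i, j) f (enum_val i) 0 j).
Lemma mkfK f : mkf (tovec f) = f.
Proof.
by apply/funext => v; apply/rowP => j; rewrite !mxE mxvecE mxE enum_rankK.
Qed.

Definition bobj (f : V -> 'rV[R]_N) :=
  edge_expect w (fun u v => 4^-1 - 3 / 4 * dotp (f u) (f v)).

Lemma ee_mul c F : c * edge_expect w F = edge_expect w (fun u v => c * F u v).
Proof.
rewrite /edge_expect mulrA mulr_sumr; congr (_ / _); apply: eq_bigr => u _.
by rewrite mulr_sumr; apply: eq_bigr => v _; ring.
Qed.

Lemma ee_ext F G : (forall u v, F u v = G u v) ->
  edge_expect w F = edge_expect w G.
Proof.
by move=> h; have -> : F = G by apply/funext => u; apply/funext => v.
Qed.

Lemma contM (s t : X -> R) : continuous s -> continuous t ->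
  continuous (fun x => s x * t x).
Proof. by move=> hs ht x; exact: (continuousM (hs x) (ht x)). Qed.

Lemma contB (s t : X -> R) : continuous s -> continuous t ->
  continuous (fun x => s x - t x).
Proof. by move=> hs ht x; exact: (continuousB (hs x) (ht x)). Qed.

Lemma cont_sum (I : Type) (h : I -> X -> R) (l : seq I) :
  (forall i, continuous (h i)) -> continuous (fun x => \sum_(i <- l) h i x).
Proof.
move=> hc; elim: l => [|a l IH].
  have -> : (fun x : X => \sum_(i <- [::]) h i x) = fun _ => 0.
    by apply/funext => x; rewrite big_nil.
  exact: cst_continuous.
have -> : (fun x : X => \sum_(i <- a :: l) h i x) =
          (fun x => h a x + \sum_(i <- l) h i x).
  by apply/funext => x; rewrite big_cons.
by move=> x; apply: continuousD; [exact: hc | exact: IH].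
Qed.

Lemma mkfc u j : continuous (fun x => mkf x u 0 j).
Proof.
have -> : (fun x => mkf x u 0 j) = (fun x : X => x 0 (mxvec_index (enum_rank u) j)).
  by apply/funext => x; rewrite mxE.
exact: coord_continuous.
Qed.

Lemma objc : continuous (fun x => bobj (mkf x)).
Proof.
rewrite /bobj /edge_expect /dotp.
apply: contM; last exact: cst_continuous.
apply: cont_sum => u; apply: cont_sum => v.
apply: contM; first exact: cst_continuous.
apply: contB; first exact: cst_continuous.
apply: contM; first exact: cst_continuous.
apply: cont_sum => j; apply: contM; exact: mkfc.
Qed.

Local Open Scope classical_set_scope.

Definition Kset : set X :=
  \bigcap_(v in [set: V]) [set x | dotp (mkf x v) (mkf x v) = 1].

Lemma Kclosed : closed Kset.
Proof.
apply: closed_bigI => v _.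
apply: (preimage_closed (f := fun x => dotp (mkf x v) (mkf x v))
                        (D := [set y : R | y = 1])); last exact: closed_eq.
move=> x _; rewrite /dotp.
by apply: cont_sum => j; apply: contM; exact: mkfc.
Qed.

Lemma Kcompact : compact Kset.
Proof.
have Bc : compact [set x : X | forall i, `[(-1 : R), 1] (x ord0 i)].
  by apply: (@rV_compact _ _ (fun=> `[(-1 : R), 1])) => _; exact: segment_compact.
apply: (subclosed_compact Kclosed Bc) => x Kx i.
case/mxvec_indexP: i => r j.
have := Kx (enum_val r) I; rewrite /= /dotp (bigD1 j) //= mxE enum_valK.
have h2 : 0 <= \sum_(i | i != j) mkf x (enum_val r) 0 i * mkf x (enum_val r) 0 i.
  by rewrite sumr_ge0 // => i _; rewrite -expr2 sqr_ge0.
move: h2; set s := \sum_(_ | _) _; set a := x 0 _ => h2 e.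
rewrite in_itv /=; apply/andP; split; nra.
Qed.

Definition unitf (v : V) : 'rV[R]_N := \row_j (j == enum_rank v)%:R.

Lemma unitf_sphere v : dotp (unitf v) (unitf v) = 1.
Proof.
rewrite /dotp (bigD1 (enum_rank v)) //= big1 => [|j /negbTE jn].
  by rewrite mxE eqxx mulr1 addr0.
by rewrite mxE jn mul0r.
Qed.

Lemma Kne : Kset !=set0.
Proof. by exists (tovec unitf) => v _; rewrite /= mkfK unitf_sphere. Qed.

Lemma A_le (a : R) : A_values w a ->
  exists f : V -> 'rV[R]_N, (forall v, on_sphere (f v)) /\ a = bobj f.
Proof.
move=> [fX [fY [fZ [hs [_ ->]]]]].
pose r3 := (Num.sqrt (3:R))^-1.
pose g v := r3 *: row_mx (fX v) (row_mx (fY v) (fZ v)).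
have gd u v : dotp (g u) (g v) =
   3^-1 * (dotp (fX u) (fX v) + (dotp (fY u) (fY v) + dotp (fZ u) (fZ v))).
  rewrite dotpZl dotpZr !dotp_row_mx mulrA; congr (_ * _).
  by rewrite /r3 -invfM -expr2 sqr_sqrtr.
have [h hh] := reduce g.
exists h; split.
  move=> v; rewrite /on_sphere hh gd; case: (hs v); rewrite /on_sphere => -> -> ->.
  by field.
by rewrite /bobj ee_mul; apply: ee_ext => u v; rewrite hh gd; field.
Qed.

Lemma B_to_A f : (forall v, on_sphere (f v)) -> A_values w (bobj f).
Proof.
move=> hs.
have E3 : (N + (N + N) = 3 * N)%N by rewrite mulSn mul2n addnn.
pose cst (x : 'rV[R]_(N + (N + N))) : 'rV[R]_(3 * N) := castmx (erefl 1%N, E3) x.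
exists (fun v => cst (row_mx (f v) (row_mx 0 0))).
exists (fun v => cst (row_mx 0 (row_mx (f v) 0))).
exists (fun v => cst (row_mx 0 (row_mx 0 (f v)))).
rewrite /on_sphere /cst; split; [|split].
- by move=> v; rewrite !dotp_cast !dotp_row_mx ?dotp0l ?dotp0r ?addr0 ?add0r hs.
- by move=> v; rewrite !dotp_cast !dotp_row_mx ?dotp0l ?dotp0r ?addr0 ?add0r.
- rewrite /bobj ee_mul; apply: ee_ext => u v.
  by rewrite !dotp_cast !dotp_row_mx ?dotp0l ?dotp0r ?addr0 ?add0r; field.
Qed.

End Main.

Theorem proposition7p4 (R : realType) (V : finType) (w : V -> V -> R) :
  weighted_graph w ->
  exists a : R, is_max (A_values w) a /\ is_max (B_values w) a.
Proof.
move=> _.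
have cw : {within @Kset R V, continuous (fun x => bobj w (mkf x))}%classic.
  by apply: continuous_subspaceT; exact: objc.
have [c cK cmax] := compact_EVT_max (@Kne R V) (@Kcompact R V) cw.
have cs : forall v, on_sphere (mkf c v).
  by move: cK; rewrite inE => Kc v; exact: (Kc v I).
have bnd : forall f : V -> 'rV[R]_#|V|, (forall v, on_sphere (f v)) ->
    bobj w f <= bobj w (mkf c).
  move=> f fs; have := cmax (tovec f); rewrite mkfK; apply.
  by rewrite inE => v _; rewrite /= mkfK; exact: fs.
exists (bobj w (mkf c)); split; split.
- exact: B_to_A.
- by move=> a /A_le [f [fs ->]]; exact: bnd.
- by exists (mkf c).
- by move=> b [f [fs ->]]; exact: bnd.
Qed.
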